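(* Let $L$ be a finite lattice, $\varphi\in R(L)$ with Möbius inverse $f$, and let $V$ be an order ideal of $L$. Then the support $\{x\in L: f(x)\neq0\}$ of $f$ is contained in $V$ if and only if $\nabla_V^b\varphi=0$ for every $b\in L\setminus V$.
   Context: $L$ is a finite lattice with order $\le$, meet $\wedge$, maximum $\hat1$; $R(L)$ is the space of real-valued functions on $L$. The Möbius inverse of $\varphi$ is the unique $f\in R(L)$ with $\varphi(x)=\sum_{y\le x}f(y)$ for all $x$. An order ideal (down-set) is a subset $V$ with $x\le y\in V\Rightarrow x\in V$. For a finite $A\subseteq L$ and $b\in L$, $\nabla_A^b\varphi=\sum_{A'\subseteq A}(-1)^{|A'|}\varphi(\bigwedge A'\wedge b)$ where $\bigwedge A'$ is the meet of $A'$ and $\bigwedge\emptyset=\hat1$; for nonempty $A=\{a_1,\dots,a_n\}$ this equals $\nabla_{a_1,\ldots,a_n}\varphi(b)$, where $\nabla_a\varphi(x)=\varphi(x)-\varphi(x\wedge a)$ and successive differences are iterated. *)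

(* Defs.v *)
From HB Require Import structures.
From mathcomp Require Import all_boot all_order all_algebra.
From mathcomp Require Import reals.
Set Implicit Arguments. Unset Strict Implicit. Unset Printing Implicit Defensive.
Import Order.TTheory GRing.Theory Num.Theory.
Local Open Scope ring_scope.
Local Open Scope order_scope.

(* A finite lattice L is a [finTBLatticeType d] (finite, nonempty, so it has
   a top \top = hat 1 and a bottom).  Real-valued functions: L -> R, R : realType. *)

Definition mobius_inverse (d : Order.disp_t) (L : finTBLatticeType d)
  (R : realType) (phi f : L -> R) : Prop :=
  forall x : L, phi x = (\sum_(y : L | (y <= x)%O) f y)%R.

Definition order_ideal (d : Order.disp_t) (L : finTBLatticeType d)
  (V : {set L}) : Prop :=
  forall x y : L, (x <= y)%O -> y \in V -> x \in V.

Definition nabla (d : Order.disp_t) (L : finTBLatticeType d)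
  (R : realType) (A : {set L}) (b : L) (phi : L -> R) : R :=
  (\sum_(A' in powerset A)
     (-1) ^+ #|A'| * phi ((\meet_(a in A') a) `&` b))%R.

(* Main.v *)
Require Import Defs.
From HB Require Import structures.
From mathcomp Require Import all_boot all_order all_algebra.
From mathcomp Require Import reals.
Import Order.TTheory GRing.Theory Num.Theory.
Local Open Scope ring_scope.

Lemma alt_sum (T : finType) (R : numDomainType) (S : {set T}) x :
  x \in S -> \sum_(A in powerset S) (-1) ^+ #|A| = 0 :> R.
Proof.
move=> xS; set s := LHS.
pose h (A : {set T}) := if x \in A then A :\ x else x |: A.
have hK : involutive h.
  move=> A; rewrite /h; case xA: (x \in A).
    by rewrite setD11 setD1K.
  by rewrite setU11 setU1K ?xA.
have hs : s = - s.
  rewrite {1}/s (reindex_inj (inv_inj hK)) /= -sumrN.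
  apply: eq_big => A.
    rewrite !powersetE /h; case: ifP => xA.
      apply/idP/idP => sub; last by apply: subset_trans sub; apply: subD1set.
      apply/subsetP => z zA; case: (eqVneq z x) => [->//|zx].
      by apply: (subsetP sub); rewrite in_setD1 zx.
    by rewrite subUset sub1set xS.
  move=> _; rewrite /h; case: ifP => xA.
    by rewrite (cardsD1 x A) xA add1n exprS mulN1r opprK.
  by rewrite cardsU1 xA add1n exprS mulN1r.
have : s *+ 2 == 0 by rewrite mulr2n {1}hs addNr.
by rewrite mulrn_eq0 /= => /eqP.
Qed.

Lemma nablaE (d : Order.disp_t) (L : finTBLatticeType d)
  (R : realType) (phi f : L -> R) (V : {set L}) b :
  mobius_inverse phi f -> order_ideal V ->
  nabla V b phi = \sum_(y | ((y <= b)%O) && (y \notin V)) f y.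
Proof.
move=> Hm HV; rewrite /nabla.
under eq_bigr => A _ do rewrite Hm big_distrr /= big_mkcond /=.
rewrite exchange_big /= [RHS]big_mkcond /=; apply: eq_bigr => y _.
have E A : (y <= (\meet_(a in A) a) `&` b)%O =
           [forall a, (a \in A) ==> (y <= a)%O] && (y <= b)%O.
  rewrite lexI; congr (_ && _); apply/meetsP/forallP => H a.
    by apply/implyP => /H.
  by move=> aA; have /implyP := H a; apply.
under eq_bigr => A _ do rewrite E.
case: (boolP (y <= b)%O) => yb /=; last first.
  by apply: big1 => A _; rewrite andbF.
under eq_bigr => A _ do rewrite andbT.
case: (boolP (y \in V)) => yV /=.
  rewrite -big_mkcondr /= -big_distrl /=.
  rewrite (eq_bigl (fun A => A \in powerset (V :&: [set z | (y <= z)%O]))).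
    by rewrite (@alt_sum _ _ _ y) ?mul0r // inE yV inE lexx.
  move=> A /=; rewrite !powersetE subsetI; congr (_ && _).
  apply/forallP/subsetP => H a.
    by rewrite inE => /(implyP (H a)).
  by apply/implyP => /H; rewrite inE.
rewrite (bigD1 set0) ?powersetE ?sub0set //= big1.
  rewrite cards0 expr0 mul1r addr0; case: ifP => // /negbT/forallP H.
  by exfalso; apply: H => a; rewrite in_set0.
move=> A /andP [AV A0]; case: ifP => // /forallP H.
exfalso; case/set0Pn: A0 => a aA.
move: (H a); rewrite aA /= => ya.
rewrite powersetE in AV.
by move: yV; rewrite (HV y a ya (subsetP AV a aA)).
Qed.

Theorem proposition2p6 (d : Order.disp_t) (L : finTBLatticeType d)
  (R : realType) (phi f : L -> R) (V : {set L}) :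
  mobius_inverse phi f -> order_ideal V ->
  ((forall x : L, f x != 0 -> x \in V) <->
   (forall b : L, b \notin V -> nabla V b phi = 0)).
Proof.
move=> Hm HV; split.
  move=> H b _; rewrite (@nablaE _ _ _ _ _ _ b Hm HV); apply: big1 => y /andP [_ yV].
  by apply/eqP; apply: contraR yV => /H ->.
move=> H.
suff K : forall n (x : L), (#|[set y | (y < x)%O]| < n)%N -> x \notin V -> f x = 0.
  move=> x fx; apply: contraR fx => xV; apply/eqP.
  exact: (K #|[set y | (y < x)%O]|.+1).
elim=> [//|n IH] x cx xV.
have := H x xV; rewrite (@nablaE _ _ _ _ _ _ x Hm HV) (bigD1 x) ?lexx ?xV //= big1.
  by rewrite addr0.
move=> y /andP [/andP [yx yV] ny]; apply: IH => //.
have ylt : (y < x)%O by rewrite lt_neqAle ny yx.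
suff P : (#|[set z | (z < y)%O]| < #|[set z | (z < x)%O]|)%N.
  exact: (leq_trans P cx).
apply: proper_card; apply/properP; split.
  apply/subsetP => z; rewrite !inE => zy; exact: lt_trans zy ylt.
by exists y; rewrite inE // ltxx.
Qed.
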